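(* For every non-integer rational number $d>1$, there exist a deterministic discounted-sum automaton $\mathcal{A}$ with discount factor $d$ and a rational number $r$ such that the cut-point language $L^{\ge r}=\{w\in L(\mathcal{A}) : wt_{\mathcal{A}}(w)\ge r\}$ is not $\omega$-regular.
   Context: For a sequence $A$ and discount factor $d>1$, $\mathrm{DS}(A,d)=\sum_{i\ge0}A[i]/d^i$. A discounted-sum automaton is a weighted $\omega$-automaton $(\mathcal{M},\gamma,\mathrm{DS}(\cdot,d))$ where $\mathcal{M}$ is a B\''uchi automaton all of whose states are accepting and $\gamma$ assigns rational weights to transitions; a run's weight is the discounted sum of its weight sequence, and $wt_{\mathcal{A}}(w)$ is the supremum of the weights of runs on $w$. It is deterministic if $\mathcal{M}$ has one initial state and at most one successor per state and letter. *)

(* Defs.v *)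
From Stdlib Require Import Reals QArith Qreals FinFun.
Set Implicit Arguments.

Definition word (Sigma : Type) := nat -> Sigma.

Definition is_DS (A : nat -> Q) (d : Q) (l : R) : Prop :=
  infinite_sum (fun i => (Q2R (A i) / (Q2R d) ^ i)%R) l.

(* Deterministic discounted-sum automaton (all states accepting):
   finite state set, one initial state, and for each state and letter at most one
   transition, carrying a rational weight. *)
Record DDSA (Sigma : Type) := {
  dstate : Type;
  dstate_fin : Finite dstate;
  dinit : dstate;
  dtrans : dstate -> Sigma -> option (dstate * Q)
}.

Definition drun (Sigma : Type) (A : DDSA Sigma) (w : word Sigma)
  (rho : nat -> dstate A) (g : nat -> Q) : Prop :=
  rho 0%nat = dinit A /\
  forall i, dtrans A (rho i) (w i) = Some (rho (S i), g i).

Definition dlang (Sigma : Type) (A : DDSA Sigma) (w : word Sigma) : Prop :=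
  exists rho g, drun A w rho g.

(* wt_A(w) >= r; since A is deterministic the run is unique, so the supremum
   over runs is the discounted sum of that run. *)
Definition cut_lang (Sigma : Type) (A : DDSA Sigma) (d r : Q) (w : word Sigma) : Prop :=
  exists rho g, drun A w rho g /\
    exists l, is_DS g d l /\ (l >= Q2R r)%R.

Definition buchi_accepts (Sigma Qs : Type) (init : Qs -> Prop)
  (delta : Qs -> Sigma -> Qs -> Prop) (acc : Qs -> Prop) (w : word Sigma) : Prop :=
  exists rho : nat -> Qs,
    init (rho 0%nat) /\ (forall i, delta (rho i) (w i) (rho (S i))) /\
    (forall N, exists i, (N <= i)%nat /\ acc (rho i)).

Definition omega_regular (Sigma : Type) (L : word Sigma -> Prop) : Prop :=
  exists (Qs : Type) (init : Qs -> Prop) (delta : Qs -> Sigma -> Qs -> Prop)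
         (acc : Qs -> Prop),
    Finite Qs /\ forall w, L w <-> buchi_accepts init delta acc w.

(* Main.v *)
Require Import Defs.
From Stdlib Require Import Reals QArith Qreals FinFun.
From Stdlib Require Import Qround Znumtheory List Lia Lra Classical FunctionalExtensionality.
From Stdlib Require Qcanon.
Import Fin2Restrict.
Lemma pigeon (X : Type) (f : nat -> X) : Finite X -> exists j k, (j < k)%nat /\ f j = f k.
Proof.
  intros [l Hl]. apply NNPP; intro H.
  assert (Hnd : NoDup (map f (seq 0 (S (length l))))).
  { apply Injective_map_NoDup_in; [|apply seq_NoDup]. intros x y _ _ E.
    destruct (Nat.lt_total x y) as [h|[h|h]]; auto; exfalso; apply H.
    - exists x, y; auto.
    - exists y, x; auto. }
  apply NoDup_incl_length with (l' := l) in Hnd.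
  - rewrite length_map, length_seq in Hnd; lia.
  - intros a _; apply Hl.
Qed.




Lemma splice_del (Sg Qs : Type) (init : Qs -> Prop) (delta : Qs -> Sg -> Qs -> Prop)
  (acc : Qs -> Prop) (w : word Sg) (rho : nat -> Qs) (J K : nat) :
  (0 < J)%nat -> (J < K)%nat -> rho J = rho K ->
  init (rho 0%nat) -> (forall i, delta (rho i) (w i) (rho (S i))) ->
  (forall N, exists i, (N <= i)%nat /\ acc (rho i)) ->
  buchi_accepts init delta acc (fun i => if (i <? J)%nat then w i else w (i + (K - J))%nat).
Proof.
  intros H0 HJK HrJK Hi Hd Hac.
  exists (fun i => if (i <? J)%nat then rho i else rho (i + (K - J))%nat).
  split; [|split].
  - replace (0 <? J)%nat with true by (symmetry; apply Nat.ltb_lt; lia). exact Hi.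
  - intro i. destruct (Nat.ltb_spec i J); destruct (Nat.ltb_spec (S i) J).
    + apply Hd.
    + assert (S i = J) by lia. subst J.
      replace (S i + (K - S i))%nat with K by lia. rewrite <- HrJK. apply Hd.
    + lia.
    + replace (S i + (K - J))%nat with (S (i + (K - J))) by lia. apply Hd.
  - intro N. destruct (Hac (N + K)%nat) as [i0 [Hi0 Ha]]. exists (i0 - (K - J))%nat.
    split; [lia|]. destruct (Nat.ltb_spec (i0 - (K - J)) J); [lia|].
    replace (i0 - (K - J) + (K - J))%nat with i0 by lia. exact Ha.
Qed.

Lemma splice_pump (Sg Qs : Type) (init : Qs -> Prop) (delta : Qs -> Sg -> Qs -> Prop)
  (acc : Qs -> Prop) (w : word Sg) (rho : nat -> Qs) (J K : nat) :
  (0 < J)%nat -> (J < K)%nat -> rho J = rho K ->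
  init (rho 0%nat) -> (forall i, delta (rho i) (w i) (rho (S i))) ->
  (forall N, exists i, (N <= i)%nat /\ acc (rho i)) ->
  buchi_accepts init delta acc (fun i => if (i <? K)%nat then w i else w (i - (K - J))%nat).
Proof.
  intros H0 HJK HrJK Hi Hd Hac.
  exists (fun i => if (i <? K)%nat then rho i else rho (i - (K - J))%nat).
  split; [|split].
  - replace (0 <? K)%nat with true by (symmetry; apply Nat.ltb_lt; lia). exact Hi.
  - intro i. destruct (Nat.ltb_spec i K); destruct (Nat.ltb_spec (S i) K).
    + apply Hd.
    + assert (S i = K) by lia. subst K.
      replace (S i - (S i - J))%nat with J by lia. rewrite HrJK. apply Hd.
    + lia.
    + replace (S i - (K - J))%nat with (S (i - (K - J))) by lia. apply Hd.
  - intro N. destruct (Hac (N + K)%nat) as [i0 [Hi0 Ha]]. exists (i0 + (K - J))%nat.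
    split; [lia|]. destruct (Nat.ltb_spec (i0 + (K - J)) K); [lia|].
    replace (i0 + (K - J) - (K - J))%nat with i0 by lia. exact Ha.
Qed.
Open Scope Q_scope.
Fixpoint Gs (d s : Q) (n : nat) : Q :=
  match n with 0%nat => s | S n => d * (Gs d s n - inject_Z (Qfloor (Gs d s n))) end.
Definition Dig (d s : Q) (n : nat) : Q := inject_Z (Qfloor (Gs d s n)).
Definition T (g : nat -> Q) (d : Q) (i : nat) : R := (Q2R (g i) / Q2R d ^ i)%R.

Lemma Gs_add (d s : Q) (a b : nat) : Gs d s (a + b)%nat = Gs d (Gs d s a) b.
Proof. induction b; simpl. now rewrite Nat.add_0_r. rewrite Nat.add_succ_r; simpl; now rewrite IHb. Qed.

Lemma Q2R_1 : Q2R 1 = 1%R. Proof. unfold Q2R; simpl; lra. Qed.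
Lemma Q2R_0 : Q2R 0 = 0%R. Proof. unfold Q2R; simpl; lra. Qed.
Lemma Q2R_iZ z : Q2R (inject_Z z) = IZR z. Proof. unfold Q2R; simpl; field. Qed.

Lemma Gs_range (d s : Q) : 1 < d -> 0 <= s < d -> forall n, 0 <= Gs d s n < d.
Proof.
  intros Hd Hs n; induction n as [|n IH]; simpl; [exact Hs|].
  set (x := Gs d s n) in *.
  assert (H1 := Qfloor_le x). assert (H2 := Qlt_floor x).
  rewrite inject_Z_plus in H2.
  assert (0 <= x - inject_Z (Qfloor x)).
  { apply Qle_Rle in H1. apply Rle_Qle. rewrite Q2R_minus.
    replace (Q2R 0) with 0%R by (unfold Q2R; simpl; lra). lra. }
  assert (x - inject_Z (Qfloor x) < 1).
  { apply Qlt_Rlt in H2. apply Rlt_Qlt. rewrite Q2R_minus. rewrite Q2R_plus, (Q2R_iZ 1) in H2.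
    rewrite Q2R_1. lra. }
  apply Qle_Rle in H. apply Qlt_Rlt in H0. assert (Hd' := Qlt_Rlt _ _ Hd).
  replace (Q2R 1) with 1%R in * by (unfold Q2R; simpl; lra).
  replace (Q2R 0) with 0%R in * by (unfold Q2R; simpl; lra).
  split; [apply Rle_Qle | apply Rlt_Qlt]; rewrite Q2R_mult;
  replace (Q2R 0) with 0%R in * by (unfold Q2R; simpl; lra); nra.
Qed.


Lemma partial (d s : Q) : 1 < d -> forall n,
  sum_f_R0 (T (Dig d s) d) n = (Q2R s - Q2R (Gs d s (S n)) / Q2R d ^ (S n))%R.
Proof.
  intros Hd. assert (Hd' := Qlt_Rlt _ _ Hd). rewrite Q2R_1 in Hd'.
  induction n as [|n IH].
  - simpl. unfold T, Dig. simpl. rewrite Q2R_mult, Q2R_minus. field. lra.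
  - simpl sum_f_R0. rewrite IH. unfold T, Dig.
    change (Gs d s (S (S n))) with (d * (Gs d s (S n) - inject_Z (Qfloor (Gs d s (S n))))).
    rewrite Q2R_mult, Q2R_minus. simpl pow. field.
    split; [|lra]. apply pow_nonzero; lra.
Qed.

Lemma conv (d s : Q) : 1 < d -> 0 <= s < d -> infinite_sum (T (Dig d s) d) (Q2R s).
Proof.
  intros Hd Hs eps Heps.
  assert (Hd' := Qlt_Rlt _ _ Hd). rewrite Q2R_1 in Hd'.
  destruct (pow_lt_1_zero (/ Q2R d)) with (y := eps) as [N HN]; auto.
  { rewrite Rabs_right. rewrite <- Rinv_1. apply Rinv_lt_contravar; lra.
    left; apply Rinv_0_lt_compat; lra. }
  exists N; intros n Hn. unfold R_dist. rewrite partial by auto.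
  specialize (HN n Hn). rewrite pow_inv in HN.
  assert (Hp : (0 < Q2R d ^ n)%R) by (apply pow_lt; lra).
  rewrite Rabs_right in HN by (left; apply Rinv_0_lt_compat; lra).
  destruct (Gs_range d s Hd Hs (S n)) as [G1 G2].
  apply Qle_Rle in G1; apply Qlt_Rlt in G2. rewrite Q2R_0 in G1.
  set (g := Q2R (Gs d s (S n))) in *.
  replace (Q2R s - g / Q2R d ^ S n - Q2R s)%R with (- (g / Q2R d ^ S n))%R by ring.
  rewrite Rabs_Ropp, Rabs_right.
  2:{ apply Rle_ge. unfold Rdiv. apply Rmult_le_pos; [lra|]. left; apply Rinv_0_lt_compat, pow_lt; lra. }
  apply Rle_lt_trans with (/ Q2R d ^ n)%R; auto.
  simpl pow. unfold Rdiv. rewrite Rinv_mult.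
  rewrite <- Rmult_assoc. rewrite <- (Rmult_1_l (/ Q2R d ^ n)) at 2.
  apply Rmult_le_compat_r. left; apply Rinv_0_lt_compat; lra.
  apply Rmult_le_reg_r with (Q2R d); [lra|]. rewrite Rmult_assoc, Rinv_l by lra. lra.
Qed.

Lemma split_sum (g h : nat -> Q) (d : Q) (m : nat) :
  Q2R d <> 0%R -> (forall i, g (S m + i)%nat = h i) -> forall n,
  sum_f_R0 (T g d) (S m + n) = (sum_f_R0 (T g d) m + / Q2R d ^ (S m) * sum_f_R0 (T h d) n)%R.
Proof.
  intros Hd0 Hgh n. induction n as [|n IH].
  - rewrite Nat.add_0_r. change (sum_f_R0 (T g d) (S m)) with (sum_f_R0 (T g d) m + T g d (S m))%R.
    simpl sum_f_R0. unfold T. rewrite <- (Hgh 0%nat), Nat.add_0_r.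
    simpl pow. field. split; auto. apply pow_nonzero; auto.
  - rewrite Nat.add_succ_r. change (sum_f_R0 (T g d) (S (S m + n))) with (sum_f_R0 (T g d) (S m + n) + T g d (S (S m + n)))%R.
    rewrite IH. change (sum_f_R0 (T h d) (S n)) with (sum_f_R0 (T h d) n + T h d (S n))%R.
    unfold T. rewrite <- (Hgh (S n)), <- Nat.add_succ_r, pow_add. field.
    split; apply pow_nonzero; auto.
Qed.

Lemma tail (g h : nat -> Q) (d : Q) (m : nat) (t : R) :
  1 < d -> (forall i, g (S m + i)%nat = h i) -> infinite_sum (T h d) t ->
  infinite_sum (T g d) (sum_f_R0 (T g d) m + t / Q2R d ^ (S m))%R.
Proof.
  intros Hd Hgh Ht eps Heps.
  assert (Hd' := Qlt_Rlt _ _ Hd). rewrite Q2R_1 in Hd'.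
  assert (Hp : (0 < Q2R d ^ S m)%R) by (apply pow_lt; lra).
  destruct (Ht (eps * Q2R d ^ S m)%R) as [N HN]. nra.
  exists (S m + N)%nat. intros n Hn.
  replace n with (S m + (n - S m))%nat by lia.
  rewrite (split_sum g h d m) by (auto; lra).
  specialize (HN (n - S m)%nat ltac:(lia)). unfold R_dist in *.
  replace (sum_f_R0 (T g d) m + / Q2R d ^ S m * sum_f_R0 (T h d) (n - S m) -
     (sum_f_R0 (T g d) m + t / Q2R d ^ S m))%R
  with (/ Q2R d ^ S m * (sum_f_R0 (T h d) (n - S m) - t))%R by (field; lra).
  rewrite Rabs_mult, Rabs_right by (left; apply Rinv_0_lt_compat; lra).
  apply Rmult_lt_reg_l with (Q2R d ^ S m)%R; auto.
  rewrite <- Rmult_assoc, Rinv_r by lra. lra.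
Qed.
Fixpoint zp (q : Z) (n : nat) : Z := match n with 0%nat => 1%Z | S n => (q * zp q n)%Z end.
Lemma zp_add (q : Z) (a b : nat) : zp q (a + b)%nat = (zp q a * zp q b)%Z.
Proof. induction a; simpl. destruct (zp q b); reflexivity. rewrite IHa; ring. Qed.

Lemma inv_nd (d s0 : Q) (p q : Z) : d * inject_Z q == inject_Z p -> rel_prime q p ->
  s0 * inject_Z q == 1 -> ~ (q | 1)%Z ->
  forall k, exists n, ~ (q | n)%Z /\ Gs d s0 k * inject_Z (zp q (S k)) == inject_Z n.
Proof.
  intros Hdq Hrp Hs0 Hq1 k. induction k as [|k [n [Hn Hk]]].
  - exists 1%Z. split; auto. simpl. rewrite Z.mul_1_r. exact Hs0.
  - set (x := Gs d s0 k) in *. set (fl := Qfloor x).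
    exists (p * (n - fl * zp q (S k)))%Z. split.
    + intro H. apply Gauss in H; auto. apply Hn.
      assert (Hz : (q | fl * zp q (S k))%Z) by (simpl; exists (fl * zp q k)%Z; ring).
      destruct H as [c Hc]. destruct Hz as [c' Hc']. exists (c + c')%Z. lia.
    + change (Gs d s0 (S k)) with (d * (x - inject_Z fl)).
      change (zp q (S (S k))) with (q * zp q (S k))%Z.
      rewrite inject_Z_mult.
      assert (E: d * (x - inject_Z fl) * (inject_Z q * inject_Z (zp q (S k))) ==
        (d * inject_Z q) * (x * inject_Z (zp q (S k)) - inject_Z fl * inject_Z (zp q (S k)))) by ring.
      rewrite E, Hdq, Hk.
      unfold Zminus. rewrite inject_Z_mult, inject_Z_plus, inject_Z_opp, inject_Z_mult. ring.
Qed.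

Lemma distinct (d s0 : Q) (p q : Z) : d * inject_Z q == inject_Z p -> rel_prime q p ->
  s0 * inject_Z q == 1 -> ~ (q | 1)%Z ->
  forall j k, (j < k)%nat -> ~ (Gs d s0 j == Gs d s0 k).
Proof.
  intros Hdq Hrp Hs0 Hq1 j k Hjk Heq.
  destruct (inv_nd d s0 p q Hdq Hrp Hs0 Hq1 j) as [nj [_ Hj]].
  destruct (inv_nd d s0 p q Hdq Hrp Hs0 Hq1 k) as [nk [Hnk Hk]].
  replace (S k) with (S j + S (k - S j))%nat in Hk by lia.
  rewrite zp_add, inject_Z_mult in Hk.
  rewrite Qmult_assoc, <- Heq, Hj, <- inject_Z_mult in Hk.
  apply (proj1 (inject_Z_injective _ _)) in Hk. apply Hnk. rewrite <- Hk. simpl.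
  exists (nj * zp q (k - S j))%Z. ring.
Qed.

Lemma divle (a b D : R) : (0 < D)%R -> (b / D <= a / D)%R -> (b <= a)%R.
Proof.
  intros HD H. apply Rmult_le_reg_r with (/ D)%R; [apply Rinv_0_lt_compat; auto|].
  unfold Rdiv in H. lra.
Qed.

Lemma unit_fin : Finite unit.
Proof. exists (tt :: nil). intros []; left; auto. Qed.

Close Scope Q_scope.

Theorem theorem6 (d : Q) (hd1 : (1 < d)%Q)
  (hdnz : forall z : Z, ~ (d == inject_Z z)%Q) :
  exists (Sigma : Type) (A : DDSA Sigma) (r : Q),
    Finite Sigma /\ ~ omega_regular (cut_lang A d r).
Proof.
  set (dr := Qred d). set (p := Qnum dr). set (q := Zpos (Qden dr)).
  assert (Hdq0 : (dr * inject_Z q == inject_Z p)%Q) by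
    (unfold p, q; destruct dr; unfold Qeq; simpl; rewrite Pos.mul_1_r; ring).
  assert (Hdq : (d * inject_Z q == inject_Z p)%Q).
  { rewrite <- Hdq0. unfold dr. rewrite Qred_correct. reflexivity. }
  assert (Hrp : rel_prime q p).
  { apply rel_prime_sym, Zgcd_1_rel_prime. apply (proj1 (Qcanon.Qred_iff dr)).
    unfold dr; apply Qcanon.Qred_involutive. }
  assert (Hq1 : ~ (q | 1)%Z).
  { intro H. apply Z.divide_1_r in H. destruct H as [H|H]; [|unfold q in H; lia].
    apply (hdnz p). rewrite <- Hdq, H. rewrite Qmult_1_r. reflexivity. }
  set (s0 := (1 # Qden dr)%Q).
  assert (Hs0 : (s0 * inject_Z q == 1)%Q) by (unfold s0, q, Qeq; simpl; lia).
  assert (Hs0r : (0 <= s0 < d)%Q).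
  { split. unfold s0, Qle; simpl; lia.
    apply Qle_lt_trans with 1%Q; auto. unfold s0, Qle; simpl; lia. }
  assert (Hd0 : (Q2R d <> 0)%R) by (apply Qlt_Rlt in hd1; rewrite Q2R_1 in hd1; lra).
  set (M := S (Z.to_nat (Qfloor d))).
  assert (Hnn : forall i, (0 <= Qfloor (Gs d s0 i))%Z).
  { intro i. destruct (Gs_range d s0 hd1 Hs0r i) as [H1 _].
    apply Qfloor_resp_le in H1. exact H1. }
  assert (Hb : forall i, (Z.to_nat (Qfloor (Gs d s0 i)) < M)%nat).
  { intro i. destruct (Gs_range d s0 hd1 Hs0r i) as [_ H2].
    apply Qlt_le_weak, Qfloor_resp_le in H2. specialize (Hnn i). unfold M. lia. }
  set (wt := fun x : Fin.t M => inject_Z (Z.of_nat (f2n x))).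
  set (A := {| dstate := unit; dstate_fin := unit_fin; dinit := tt;
               dtrans := fun _ a => Some (tt, wt a) |}).
  exists (Fin.t M), A, s0. split; [apply Fin_Finite|].
  set (w := fun i => n2f (Hb i)).
  assert (Hw : forall i, wt (w i) = Dig d s0 i).
  { intro i. unfold wt, w, Dig. rewrite f2n_n2f, Znat.Z2Nat.id by apply Hnn. reflexivity. }
  assert (Hcut : forall v, cut_lang A d s0 v ->
     exists l, infinite_sum (T (fun i => wt (v i)) d) l /\ (l >= Q2R s0)%R).
  { intros v [rho [g [[_ Hr] [l [Hl Hge]]]]]. exists l; split; auto.
    assert (E : g = fun i => wt (v i)).
    { apply functional_extensionality; intro i. specialize (Hr i). simpl in Hr.
      injection Hr; auto. }
    subst g. exact Hl. }
  assert (Hwf : (fun i => wt (w i)) = Dig d s0) by (apply functional_extensionality; exact Hw).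
  assert (Hwin : cut_lang A d s0 w).
  { exists (fun _ => tt), (fun i => wt (w i)). split.
    - split; [reflexivity|intro i; reflexivity].
    - exists (Q2R s0). split; [|lra]. unfold is_DS. change (infinite_sum (T (fun i => wt (w i)) d) (Q2R s0)).
      rewrite Hwf. apply conv; auto. }
  assert (Htail : forall n, infinite_sum (T (Dig d (Gs d s0 n)) d) (Q2R (Gs d s0 n))).
  { intro n. apply conv; auto. apply Gs_range; auto. }
  assert (HDa : forall a i, Dig d s0 (a + i) = Dig d (Gs d s0 a) i).
  { intros a i. unfold Dig. rewrite Gs_add. reflexivity. }
  assert (Ew : forall m, Q2R s0 = (sum_f_R0 (T (Dig d s0) d) m + Q2R (Gs d s0 (S m)) / Q2R d ^ (S m))%R).
  { intro m. apply uniqueness_sum with (T (Dig d s0) d). apply conv; auto.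
    apply tail with (h := Dig d (Gs d s0 (S m))); auto. }
  assert (HDp : forall n, (0 < Q2R d ^ n)%R).
  { intro n. apply pow_lt. apply Qlt_Rlt in hd1; rewrite Q2R_1 in hd1; lra. }
  intros [Qs [init [delta [acc [HQ Hiff]]]]].
  destruct (proj1 (Hiff w) Hwin) as [rho [Hi [Hdl Hac]]].
  destruct (pigeon Qs (fun i => rho (S i)) HQ) as [j [k [Hjk HJK]]]. simpl in HJK.
  assert (Hle1 : (Q2R (Gs d s0 (S j)) <= Q2R (Gs d s0 (S k)))%R).
  { destruct (Hcut _ (proj2 (Hiff _) (splice_del _ _ init delta acc w rho (S j) (S k)
      ltac:(lia) ltac:(lia) HJK Hi Hdl Hac))) as [l [Hl Hge]].
    set (g := fun i => wt (if (i <? S j)%nat then w i else w (i + (S k - S j))%nat)) in Hl.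
    assert (Ht := tail g (Dig d (Gs d s0 (S k))) d j (Q2R (Gs d s0 (S k))) hd1).
    assert (Heq : l = (sum_f_R0 (T g d) j + Q2R (Gs d s0 (S k)) / Q2R d ^ S j)%R).
    { apply uniqueness_sum with (T g d); auto. apply Ht; auto.
      intro i. unfold g. destruct (Nat.ltb_spec (S j + i) (S j)); [lia|].
      rewrite Hw. replace (S j + i + (S k - S j))%nat with (S k + i)%nat by lia. apply HDa. }
    assert (Hpre : sum_f_R0 (T g d) j = sum_f_R0 (T (Dig d s0) d) j).
    { apply sum_eq. intros i Hij. unfold T, g. destruct (Nat.ltb_spec i (S j)); [|lia].
      rewrite Hw. reflexivity. }
    rewrite Hpre in Heq. rewrite (Ew j) in Hge. apply divle with (Q2R d ^ S j)%R; auto. lra. }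
  assert (Hle2 : (Q2R (Gs d s0 (S k)) <= Q2R (Gs d s0 (S j)))%R).
  { destruct (Hcut _ (proj2 (Hiff _) (splice_pump _ _ init delta acc w rho (S j) (S k)
      ltac:(lia) ltac:(lia) HJK Hi Hdl Hac))) as [l [Hl Hge]].
    set (g := fun i => wt (if (i <? S k)%nat then w i else w (i - (S k - S j))%nat)) in Hl.
    assert (Ht := tail g (Dig d (Gs d s0 (S j))) d k (Q2R (Gs d s0 (S j))) hd1).
    assert (Heq : l = (sum_f_R0 (T g d) k + Q2R (Gs d s0 (S j)) / Q2R d ^ S k)%R).
    { apply uniqueness_sum with (T g d); auto. apply Ht; auto.
      intro i. unfold g. destruct (Nat.ltb_spec (S k + i) (S k)); [lia|].
      rewrite Hw. replace (S k + i - (S k - S j))%nat with (S j + i)%nat by lia. apply HDa. }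
    assert (Hpre : sum_f_R0 (T g d) k = sum_f_R0 (T (Dig d s0) d) k).
    { apply sum_eq. intros i Hij. unfold T, g. destruct (Nat.ltb_spec i (S k)); [|lia].
      rewrite Hw. reflexivity. }
    rewrite Hpre in Heq. rewrite (Ew k) in Hge. apply divle with (Q2R d ^ S k)%R; auto. lra. }
  apply (distinct d s0 p q Hdq Hrp Hs0 Hq1 (S j) (S k)); [lia|].
  apply eqR_Qeq. lra.
Qed.
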